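(* Assume (F1)–(F3) and let $\tau\ge0$, $c\in\mathbb R$. Let $w\in C^2(\mathbb R)$ be a monotonically decreasing solution of $w''(x)+cw'(x)+w(x)\big(1-w(x)-f(w(x+c\tau))\big)=0$ on $\mathbb R$. If $w(-\infty)=w_0$ and $w(+\infty)=0$, then $c<0$. If $w(-\infty)=1$ and $w(+\infty)=w_0$, then $c>0$.
   Context: $f:\mathbb R\to\mathbb R$ is $C^4$ with bounded derivatives and satisfies: (F1) $f(w)>0$ for $0\le w<1$, $f(1)=0$, $f'(1)>-1$; (F2) $f(0)>1$, $f'(0)>0$, and $f(w)>1$ for $0\le w<w_*$ for some $w_*\in(0,1)$; (F3) the equation $f(w)=1-w$ has exactly one solution $w_0$ in $(0,1)$, and $f'(w_0)<-1$; hence $f(w)>1-w$ for $0\le w<w_0$ and $f(w)<1-w$ for $w_0<w<1$. *)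

(* Defs.v *)
From Stdlib Require Import Reals Lra.
Open Scope R_scope.

Definition C4_bounded_derivs (f f1 f2 f3 f4 : R -> R) : Prop :=
  (forall x, derivable_pt_lim f x (f1 x)) /\
  (forall x, derivable_pt_lim f1 x (f2 x)) /\
  (forall x, derivable_pt_lim f2 x (f3 x)) /\
  (forall x, derivable_pt_lim f3 x (f4 x)) /\
  continuity f4 /\
  (exists B, forall x,
      Rabs (f1 x) <= B /\ Rabs (f2 x) <= B /\ Rabs (f3 x) <= B /\ Rabs (f4 x) <= B).

Definition C2_with (w w1 w2 : R -> R) : Prop :=
  (forall x, derivable_pt_lim w x (w1 x)) /\
  (forall x, derivable_pt_lim w1 x (w2 x)) /\
  continuity w2.

Definition lim_minus_infty (w : R -> R) (L : R) : Prop :=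
  forall eps, eps > 0 -> exists M, forall x, x <= M -> Rabs (w x - L) < eps.

Definition lim_plus_infty (w : R -> R) (L : R) : Prop :=
  forall eps, eps > 0 -> exists M, forall x, x >= M -> Rabs (w x - L) < eps.

Definition decreasing_fun (w : R -> R) : Prop :=
  forall x y, x <= y -> w y <= w x.

(* Main.v *)
Require Import Defs.
From Stdlib Require Import Reals Lra Psatz.
Open Scope R_scope.

Definition mkder (F F' : R -> R) (H : forall x, derivable_pt_lim F x (F' x)) : derivable F :=
  fun x => exist _ (F' x) (H x).

Lemma cont_of (F F' : R -> R) : (forall x, derivable_pt_lim F x (F' x)) -> continuity F.
Proof. intro H. apply derivable_continuous. exact (mkder F F' H). Qed.

Lemma mvt (F F' : R -> R) (H : forall x, derivable_pt_lim F x (F' x)) a b :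
  a < b -> exists c, F b - F a = F' c * (b - a) /\ a < c < b.
Proof.
  intro Hab. destruct (MVT_cor1 F a b (mkder F F' H) Hab) as [c [E Hc]].
  exists c. split; [|exact Hc]. rewrite E. f_equal.
Qed.

Lemma mono_up (F F' : R -> R) (H : forall x, derivable_pt_lim F x (F' x)) :
  (forall x, F' x >= 0) -> forall a b, a <= b -> F a <= F b.
Proof.
  intros Hp a b Hab. destruct (Req_dec a b) as [->|Hn]; [lra|].
  destruct (mvt F F' H a b) as [c [E _]]; [lra|].
  specialize (Hp c). nra.
Qed.

Lemma mono_down (F F' : R -> R) (H : forall x, derivable_pt_lim F x (F' x)) :
  (forall x, F' x <= 0) -> forall a b, a <= b -> F b <= F a.
Proof.
  intros Hp a b Hab. destruct (Req_dec a b) as [->|Hn]; [lra|].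
  destruct (mvt F F' H a b) as [c [E _]]; [lra|].
  specialize (Hp c). nra.
Qed.

Lemma strict_up (F : R -> R) x l : derivable_pt_lim F x l -> l > 0 ->
  exists x2, x < x2 /\ F x < F x2.
Proof.
  intros H Hl. destruct (H l Hl) as [d Hd].
  pose (h := d / 2). assert (Hh : 0 < h) by (unfold h; destruct d; simpl; lra).
  specialize (Hd h ltac:(lra) ltac:(rewrite Rabs_right; unfold h; destruct d; simpl in *; lra)).
  exists (x + h). split; [lra|].
  set (q := (F (x + h) - F x) / h) in Hd.
  assert (E : F (x + h) - F x = q * h) by (unfold q; field; lra).
  apply Rabs_def2 in Hd. nra.
Qed.

Lemma strict_down (F : R -> R) x l : derivable_pt_lim F x l -> l < 0 ->
  exists x2, x < x2 /\ F x2 < F x.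
Proof.
  intros H Hl. destruct (H (-l) ltac:(lra)) as [d Hd].
  pose (h := d / 2). assert (Hh : 0 < h) by (unfold h; destruct d; simpl; lra).
  specialize (Hd h ltac:(lra) ltac:(rewrite Rabs_right; unfold h; destruct d; simpl in *; lra)).
  exists (x + h). split; [lra|].
  set (q := (F (x + h) - F x) / h) in Hd.
  assert (E : F (x + h) - F x = q * h) by (unfold q; field; lra).
  apply Rabs_def2 in Hd. nra.
Qed.

Lemma deriv_nonpos (w w1 : R -> R) : (forall x, derivable_pt_lim w x (w1 x)) ->
  decreasing_fun w -> forall x, w1 x <= 0.
Proof.
  intros H Hd x. destruct (Rle_dec (w1 x) 0) as [|Hn]; [auto|].
  destruct (strict_up w x (w1 x) (H x) ltac:(lra)) as [x2 [H1 H2]].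
  specialize (Hd x x2 ltac:(lra)). lra.
Qed.

Lemma bound_above w L : decreasing_fun w -> lim_minus_infty w L -> forall x, w x <= L.
Proof.
  intros Hd Hl x. destruct (Rle_dec (w x) L) as [|Hn]; [auto|].
  destruct (Hl (w x - L) ltac:(lra)) as [M HM].
  specialize (HM (Rmin M x) (Rmin_l _ _)). specialize (Hd (Rmin M x) x (Rmin_r _ _)).
  apply Rabs_def2 in HM. lra.
Qed.

Lemma bound_below w L : decreasing_fun w -> lim_plus_infty w L -> forall x, L <= w x.
Proof.
  intros Hd Hl x. destruct (Rle_dec L (w x)) as [|Hn]; [auto|].
  destruct (Hl (L - w x) ltac:(lra)) as [M HM].
  specialize (HM (Rmax M x) (Rle_ge _ _ (Rmax_l _ _))). specialize (Hd x (Rmax M x) (Rmax_r _ _)).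
  apply Rabs_def2 in HM. lra.
Qed.

Lemma midpoint w A B m : continuity w -> lim_minus_infty w A -> lim_plus_infty w B ->
  B < m < A -> exists x, w x = m.
Proof.
  intros Hc HA HB Hm.
  destruct (HA (A - m) ltac:(lra)) as [M1 H1]. specialize (H1 M1 (Rle_refl _)).
  destruct (HB (m - B) ltac:(lra)) as [M2 H2].
  specialize (H2 (Rmax (M1 + 1) M2) (Rle_ge _ _ (Rmax_r _ _))).
  apply Rabs_def2 in H1. apply Rabs_def2 in H2.
  destruct (IVT_cor (fun t => w t - m) M1 (Rmax (M1 + 1) M2)) as [z [_ Hz]].
  - apply continuity_minus; [exact Hc| apply continuity_const; intros ? ?; reflexivity].
  - pose proof (Rmax_l (M1 + 1) M2). lra.
  - simpl. nra.
  - exists z. simpl in Hz. lra.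
Qed.

Lemma small_left w w1 L : (forall x, derivable_pt_lim w x (w1 x)) -> lim_minus_infty w L ->
  forall K, K > 0 -> forall x1, exists a, a <= x1 /\ Rabs (w1 a) < K.
Proof.
  intros H Hl K HK x1. destruct (Hl (K/2) ltac:(lra)) as [M HM].
  set (M' := Rmin M x1).
  destruct (mvt w w1 H (M' - 1) M' ltac:(lra)) as [c [E Hc]].
  exists c. split. { pose proof (Rmin_r M x1). unfold M' in *. lra. }
  assert (A1 := HM M' (Rmin_l _ _)). assert (A2 := HM (M' - 1) ltac:(pose proof (Rmin_l M x1); unfold M' in *; lra)).
  apply Rabs_def2 in A1. apply Rabs_def2 in A2.
  replace (M' - (M' - 1)) with 1 in E by ring. apply Rabs_def1; lra.
Qed.

Lemma small_right w w1 L : (forall x, derivable_pt_lim w x (w1 x)) -> lim_plus_infty w L ->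
  forall K, K > 0 -> forall x1, exists a, x1 <= a /\ Rabs (w1 a) < K.
Proof.
  intros H Hl K HK x1. destruct (Hl (K/2) ltac:(lra)) as [M HM].
  set (M' := Rmax M x1).
  destruct (mvt w w1 H M' (M' + 1) ltac:(lra)) as [c [E Hc]].
  exists c. split. { pose proof (Rmax_r M x1). unfold M' in *. lra. }
  assert (A1 := HM M' (Rle_ge _ _ (Rmax_l _ _))). assert (A2 := HM (M' + 1) ltac:(pose proof (Rmax_l M x1); unfold M' in *; lra)).
  apply Rabs_def2 in A1. apply Rabs_def2 in A2.
  replace (M' + 1 - M') with 1 in E by ring. apply Rabs_def1; lra.
Qed.

Lemma g_pos (f f1 : R -> R) w0 (Hd : forall x, derivable_pt_lim f x (f1 x))
  (F2a : f 0 > 1) (Hw0 : 0 < w0 < 1)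
  (Hw0uniq : forall v, 0 < v < 1 -> f v = 1 - v -> v = w0) :
  forall v, 0 <= v < w0 -> f v > 1 - v.
Proof.
  intros v Hv. destruct (Rgt_dec (f v) (1 - v)) as [|Hn]; [auto|].
  assert (Hv0 : 0 < v) by (destruct (Req_dec v 0) as [->|]; lra).
  destruct (IVT_cor (fun t => f t - 1 + t) 0 v) as [z [Hz Ez]].
  - apply continuity_plus; [apply continuity_minus|apply derivable_continuous, derivable_id].
    + exact (cont_of f f1 Hd).
    + apply continuity_const; intros ? ?; reflexivity.
  - lra.
  - simpl. nra.
  - simpl in Ez. assert (z <> 0) by (intro; subst; lra).
    assert (z = w0) by (apply Hw0uniq; lra). lra.
Qed.

Lemma g_neg (f f1 : R -> R) w0 (Hd : forall x, derivable_pt_lim f x (f1 x))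
  (F1b : f 1 = 0) (F1c : f1 1 > -1) (Hw0 : 0 < w0 < 1)
  (Hw0uniq : forall v, 0 < v < 1 -> f v = 1 - v -> v = w0) :
  forall v, w0 < v < 1 -> f v < 1 - v.
Proof.
  assert (Hv' : exists v', w0 < v' < 1 /\ f v' < 1 - v').
  { destruct (Hd 1 (f1 1 + 1) ltac:(lra)) as [d Hdd].
    set (h := - Rmin (d/2) ((1 - w0)/2)).
    assert (Hd0 : 0 < d) by (destruct d; simpl; lra).
    assert (Hh1 : 0 < Rmin (d/2) ((1 - w0)/2)) by (apply Rmin_glb_lt; lra).
    pose proof (Rmin_l (d/2) ((1 - w0)/2)). pose proof (Rmin_r (d/2) ((1 - w0)/2)).
    specialize (Hdd h ltac:(unfold h; lra) ltac:(unfold h; rewrite Rabs_left; lra)).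
    set (q := (f (1 + h) - f 1) / h) in Hdd.
    assert (E : f (1 + h) - f 1 = q * h) by (unfold q; field; unfold h; lra).
    apply Rabs_def2 in Hdd. exists (1 + h). split; [unfold h in *; lra|].
    rewrite F1b in E. assert (h < 0) by (unfold h; lra). nra. }
  destruct Hv' as [v' [Hv'1 Hv'2]].
  intros v Hv. destruct (Rlt_dec (f v) (1 - v)) as [|Hn]; [auto|].
  destruct (Req_dec (f v) (1 - v)) as [E|Hne].
  { assert (v = w0) by (apply Hw0uniq; lra). lra. }
  assert (Hc : continuity (fun t => f t - 1 + t)).
  { apply continuity_plus; [apply continuity_minus|apply derivable_continuous, derivable_id].
    + exact (cont_of f f1 Hd).
    + apply continuity_const; intros ? ?; reflexivity. }
  destruct (Rle_dec v v') as [Hle|Hgt].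
  - destruct (IVT_cor _ v v' Hc Hle) as [z [Hz Ez]]; [simpl; nra|].
    simpl in Ez. assert (z = w0) by (apply Hw0uniq; lra). lra.
  - destruct (IVT_cor _ v' v Hc ltac:(lra)) as [z [Hz Ez]]; [simpl; nra|].
    simpl in Ez. assert (z = w0) by (apply Hw0uniq; lra). lra.
Qed.
Lemma phi_der (w w1 w2 : R -> R) c : (forall x, derivable_pt_lim w x (w1 x)) ->
  (forall x, derivable_pt_lim w1 x (w2 x)) ->
  forall x, derivable_pt_lim (fun x => w1 x + c * w x) x (w2 x + c * w1 x).
Proof.
  intros H1 H2 x.
  apply (derivable_pt_lim_plus w1 (fun x => c * w x)); [apply H2|].
  apply (derivable_pt_lim_scal w c x (w1 x)). apply H1.
Qed.

Theorem lemma4p3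
  (f f1 f2 f3 f4 : R -> R)
  (Hf : C4_bounded_derivs f f1 f2 f3 f4)
  (* (F1) *)
  (F1a : forall v, 0 <= v < 1 -> f v > 0)
  (F1b : f 1 = 0)
  (F1c : f1 1 > -1)
  (* (F2) *)
  (F2a : f 0 > 1)
  (F2b : f1 0 > 0)
  (F2c : exists ws, 0 < ws < 1 /\ forall v, 0 <= v < ws -> f v > 1)
  (* (F3): w0 is the unique solution of f(v) = 1 - v in (0,1), and f'(w0) < -1 *)
  (w0 : R)
  (Hw0 : 0 < w0 < 1)
  (Hw0eq : f w0 = 1 - w0)
  (Hw0uniq : forall v, 0 < v < 1 -> f v = 1 - v -> v = w0)
  (Hw0der : f1 w0 < -1)
  (tau c : R) (Htau : 0 <= tau)
  (w w1 w2 : R -> R)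
  (Hw : C2_with w w1 w2)
  (Hdec : decreasing_fun w)
  (Heq : forall x, w2 x + c * w1 x + w x * (1 - w x - f (w (x + c * tau))) = 0) :
  (lim_minus_infty w w0 -> lim_plus_infty w 0 -> c < 0) /\
  (lim_minus_infty w 1 -> lim_plus_infty w w0 -> c > 0).
Proof.
  destruct Hf as [Hfd _]. destruct Hw as [Hw1 [Hw2 _]].
  pose proof (g_pos f f1 w0 Hfd F2a Hw0 Hw0uniq) as Gp.
  pose proof (g_neg f f1 w0 Hfd F1b F1c Hw0 Hw0uniq) as Gn.
  pose proof (deriv_nonpos w w1 Hw1 Hdec) as W1n.
  pose proof (phi_der w w1 w2 c Hw1 Hw2) as Pd.
  set (Phi := fun x => w1 x + c * w x) in Pd.
  assert (Hcw : continuity w) by exact (cont_of w w1 Hw1).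
  split.
  - intros Hm Hp. destruct (Rlt_dec c 0) as [|Hc]; [auto|exfalso].
    assert (Hc0 : 0 <= c) by lra.
    pose proof (bound_above w w0 Hdec Hm) as Ba.
    pose proof (bound_below w 0 Hdec Hp) as Bb.
    assert (Key : forall x, w2 x + c * w1 x >= 0).
    { intro x. specialize (Heq x).
      assert (Hu : w (x + c * tau) <= w x) by (apply Hdec; nra).
      pose proof (Ba x). pose proof (Bb x). pose proof (Bb (x + c * tau)).
      destruct (Req_dec (w (x + c * tau)) w0) as [E|Ne].
      + rewrite E in Heq. rewrite Hw0eq in Heq. assert (w x = w0) by lra.
        nra.
      + pose proof (Gp (w (x + c * tau)) ltac:(split; [auto|pose proof (Ba (x + c*tau)); lra])).
        nra. }
    destruct (midpoint w w0 0 (w0/2) Hcw Hm Hp ltac:(lra)) as [x Hx].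
    assert (Kx : w2 x + c * w1 x > 0).
    { specialize (Heq x).
      assert (Hu : w (x + c * tau) <= w x) by (apply Hdec; nra).
      pose proof (Bb (x + c * tau)).
      pose proof (Gp (w (x + c * tau)) ltac:(lra)). nra. }
    destruct (strict_up Phi x _ (Pd x) Kx) as [x2 [Hx2 HPx]].
    destruct (small_left w w1 w0 Hw1 Hm (Phi x2 - Phi x) ltac:(lra) x) as [a [Ha Hwa]].
    pose proof (mono_up Phi _ Pd Key a x Ha).
    apply Rabs_def2 in Hwa. pose proof (W1n x2).
    assert (Hwd : w x2 <= w a) by (apply Hdec; lra).
    unfold Phi in *. nra.
  - intros Hm Hp. destruct (Rgt_dec c 0) as [|Hc]; [auto|exfalso].
    assert (Hc0 : c <= 0) by lra.
    pose proof (bound_above w 1 Hdec Hm) as Ba.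
    pose proof (bound_below w w0 Hdec Hp) as Bb.
    assert (Fle : forall x, w0 <= w x -> w x <= w (x + c * tau) ->
               f (w (x + c * tau)) <= 1 - w x /\ (w0 < w x < 1 -> f (w (x + c * tau)) < 1 - w x)).
    { intros x H1 H2. pose proof (Ba (x + c * tau)) as H3.
      destruct (Req_dec (w (x + c * tau)) 1) as [E|Ne].
      - rewrite E, F1b. pose proof (Ba x). split; lra.
      - destruct (Req_dec (w (x + c * tau)) w0) as [E|Ne2].
        + rewrite E, Hw0eq. split; lra.
        + pose proof (Gn (w (x + c * tau)) ltac:(lra)). split; lra. }
    assert (Key : forall x, w2 x + c * w1 x <= 0).
    { intro x. specialize (Heq x).
      assert (Hu : w x <= w (x + c * tau)) by (apply Hdec; nra).
      pose proof (Bb x). destruct (Fle x (Bb x) Hu) as [F _]. nra. }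
    destruct (midpoint w 1 w0 ((w0+1)/2) Hcw Hm Hp ltac:(lra)) as [x Hx].
    assert (Kx : w2 x + c * w1 x < 0).
    { specialize (Heq x).
      assert (Hu : w x <= w (x + c * tau)) by (apply Hdec; nra).
      destruct (Fle x (Bb x) Hu) as [_ F]. specialize (F ltac:(lra)). nra. }
    destruct (strict_down Phi x _ (Pd x) Kx) as [x2 [Hx2 HPx]].
    destruct (small_right w w1 w0 Hw1 Hp (Phi x - Phi x2) ltac:(lra) x2) as [b [Hb Hwb]].
    pose proof (mono_down Phi _ Pd Key x2 b Hb).
    apply Rabs_def2 in Hwb. pose proof (W1n x).
    assert (Hwd : w b <= w x) by (apply Hdec; lra).
    unfold Phi in *. nra.
Qed.
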